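(* Let $r,m\ge1$, let $\xi$ be an $F^r$-stable irreducible character of $G^{F^{rm}}$ and $\tilde\xi$ any extension of $\xi$ to $G^{F^{rm}}\langle\sigma^r\rangle$. Let $R^{(m)}_{\tilde\xi}=Sh_{F^{rm}/F^r}(f)$, where $f\in C(G^{F^{rm}}/{\sim_{F^r}})$ is $f(x)=\tilde\xi(x\sigma^r)$; this is a class function on $G^{F^r}$. Then $$|G^{F^{rm}}|^{-1}\sum_{\hat g\in G^{F^{rm}}}\tilde\xi(N_r(\hat g)\sigma^r)=|G^F|^{-1}\sum_{g\in G^F}R^{(m)}_{\tilde\xi}(g).$$
   Context: $G$ is a connected algebraic group defined over $\mathbb F_q$ with Frobenius map $F$. For a finite group $\Gamma$ with automorphism $\phi$, $\Gamma/{\sim_\phi}$ is the set of $\phi$-twisted conjugacy classes ($x\sim z^{-1}x\phi(z)$), and $C(Y)$ is the space of $\bar{\mathbb Q}_\ell$-valued functions on $Y$. Norm map: for commuting Frobenius maps $F_1,F_2$ on a connected group $X$ and $x\in X^{F_1}$, choose $\alpha\in X$ with $x=\alpha^{-1}F_2(\alpha)$ and put $x'=F_1(\alpha)\alpha^{-1}\in X^{F_2}$; this induces a bijection $N_{F_1/F_2}:X^{F_1}/{\sim_{F_2}}\to X^{F_2}/{\sim_{F_1^{-1}}}$. Shintani descent $Sh_{F_1/F_2}:C(X^{F_1}/{\sim_{F_2}})\to C(X^{F_2}/{\sim_{F_1^{-1}}})$ is $Sh_{F_1/F_2}(f)(N_{F_1/F_2}(x))=f(x)$. Here $F_1=F^{rm}$,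 $F_2=F^r$, and $F^{rm}$ acts trivially on $G^{F^r}$, so the target is the space of class functions on $G^{F^r}$. $\sigma=F|_{G^{F^{rm}}}$, $G^{F^{rm}}\langle\sigma\rangle$ is the semidirect product with the cyclic group of order $rm$ generated by $\sigma$ ($\sigma g\sigma^{-1}=F(g)$), and $G^{F^{rm}}\langle\sigma^r\rangle$ its subgroup generated by $G^{F^{rm}}$ and $\sigma^r$. For $x\in G^{F^{rm}}$, $N_k(x)=xF(x)\cdots F^{k-1}(x)$. *)

(* Defs.v *)
From HB Require Import structures.
From mathcomp Require Import boolp.
From mathcomp Require Import all_boot all_order all_algebra all_fingroup.
From mathcomp Require Import all_solvable all_field all_character.
Set Implicit Arguments. Unset Strict Implicit. Unset Printing Implicit Defensive.
Import GRing.Theory Num.Theory.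

Definition frobenius_datum (T : groupType) (F : T -> T) : Prop :=
  [/\ {morph F : x y / (x * y)%g},
      bijective F,
      (* Lang's theorem for every power F^k, k >= 1 *)
      (forall k, 0 < k -> forall x : T, exists a : T, x = (a^-1 * iter k F a)%g),
      (* every point is rational over some finite extension *)
      (forall t : T, exists2 k, 0 < k & iter k F t = t)
    &
      (forall k, 0 < k -> exists s : seq T, forall t, iter k F t = t -> t \in s)].

(* sigma g sigma^-1 = F(g) inside the finite group gT, where sigma = s *)
Definition frobK (gT : finGroupType) (s g : gT) : gT := (g ^ s^-1)%g.

Definition normK (gT : finGroupType) (s : gT) (k : nat) (x : gT) : gT :=
  (\prod_(i < k) iter i (frobK s) x)%g.

(* Fixed points of F^k (as a subset of the model K of G^{F^{rm}}) *)
Definition fixedK (T : groupType) (gT : finGroupType) (F : T -> T)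
    (iota : gT -> T) (K : {set gT}) (k : nat) : {set gT} :=
  [set g in K | iter k F (iota g) == iota g].

(* Shintani descent Sh_{F^{rm}/F^r}(f): its value at y = N(x) is f(x), where
   N(x) = F^{rm}(a) a^-1 for any a with x = a^-1 F^r(a). *)
Definition shintani (T : groupType) (gT : finGroupType) (F : T -> T)
    (iota : gT -> T) (K : {set gT}) (r m : nat) (f : gT -> algC) (y : gT)
    : algC :=
  if [pick x in K | `[< exists a : T,
        iota x = (a^-1 * iter r F a)%g /\
        iota y = (iter (r * m) F a * a^-1)%g >]] is Some x
  then f x else 0%R.

(* Main.v *)
Require Import Defs.
From HB Require Import structures.
From mathcomp Require Import boolp.
From mathcomp Require Import all_boot all_order all_algebra all_fingroup.
From mathcomp Require Import all_solvable all_field all_character.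
Import GRing.Theory Num.Theory.

Section Helpers.
Variable T : groupType.

Lemma morph1_h (f : T -> T) : {morph f : x y / (x * y)%g} -> f 1%g = 1%g.
Proof. by move=> hf; apply: (@mulgI _ (f 1%g)); rewrite -hf !mulg1. Qed.

Lemma morphV_h (f : T -> T) : {morph f : x y / (x * y)%g} ->
  forall x, f (x^-1)%g = ((f x)^-1)%g.
Proof.
move=> hf x; apply: (@mulgI _ (f x)); rewrite -hf !mulgV; exact: morph1_h.
Qed.

Lemma iter_morph_h (f : T -> T) n : {morph f : x y / (x * y)%g} ->
  {morph iter n f : x y / (x * y)%g}.
Proof. by move=> hf x y; elim: n => //= n ->; rewrite hf. Qed.

Lemma tele_h (f : T -> T) (hf : {morph f : x y / (x * y)%g}) a i :
  (\prod_(j < i) iter j f (a^-1 * f a) = a^-1 * iter i f a)%g.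
Proof.
elim: i => [|i IH]; first by rewrite big_ord0 /= mulVg.
rewrite big_ord_recr /= IH (iter_morph_h _ i hf) (morphV_h _ (iter_morph_h _ i hf)).
by rewrite -iterSr iterS mulgA mulgK.
Qed.
End Helpers.

Lemma sumX_h (gT : finGroupType) (A B : {set gT}) (G : gT * gT -> algC) :
  (\sum_(p in setX A B) G p = \sum_(a in A) \sum_(b in B) G (a, b))%R.
Proof.
rewrite pair_big /=; apply: eq_big => [[a b]|[a b] _] //.
by rewrite in_setX.
Qed.

Theorem proposition1p9
  (T : groupType) (F : T -> T) (hF : frobenius_datum F)
  (r m : nat) (hr : 0 < r) (hm : 0 < m)
  (gT : finGroupType) (K : {group gT}) (s : gT) (iota : gT -> T)
  (hsN : s \in 'N(K)%g) (hs_ord : #[s]%g = (r * m)%N)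
  (hKs : (K :&: <[s]> = 1)%g)
  (hiota_morph : {in K &, {morph iota : x y / (x * y)%g}})
  (hiota_inj : {in K &, injective iota})
  (hiota_im : forall t : T, iter (r * m) F t = t <-> exists2 k, k \in K & iota k = t)
  (hiota_F : {in K, forall k, iota (frobK s k) = F (iota k)})
  (xi : 'CF(K)) (hxi : xi \in irr K)
  (hxi_stable : {in K, forall x, xi (iter r (frobK s) x) = xi x})
  (xit : 'CF(K <*> <[s ^+ r]>)%g) (hxit : xit \is a character)
  (hxit_ext : ('Res[K] xit)%R = xi) :
  ((#|K|%:R)^-1 * \sum_(g in K) xit (normK s r g * s ^+ r)%g =
   (#|fixedK F iota K 1|%:R)^-1 *
     \sum_(g in fixedK F iota K 1)
        shintani F iota K r m (fun x => xit (x * s ^+ r)%g) g)%R.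
Proof.
case: hF => Fm _ Lang _ _.
have n0 : 0 < r * m by rewrite muln_gt0 hr hm.
set n := r * m in hiota_im n0 *.
have Fn := @iter_morph_h T F n Fm.
have FnV := @morphV_h T _ Fn.
have FrV := @morphV_h T _ (@iter_morph_h T F r Fm).
have iota1 : iota 1%g = 1%g.
  apply: (@mulgI _ (iota 1%g)); rewrite -hiota_morph ?group1 //.
  by rewrite !mulg1.
have iotaV : {in K, forall k, iota k^-1 = (iota k)^-1}%g.
  move=> k kK; apply: (@mulgI _ (iota k)); rewrite -hiota_morph ?groupV //.
  by rewrite !mulgV.
have sVN : (s^-1 \in 'N(K))%g by rewrite groupV.
have Kfrob : forall i k, k \in K -> iter i (frobK s) k \in K.
  by move=> i k kK; elim: i => //= i IH; rewrite /frobK memJ_norm.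
have iotaFi : forall i k, k \in K -> iota (iter i (frobK s) k) = iter i F (iota k).
  by move=> i k kK; elim: i => //= i <-; rewrite hiota_F ?Kfrob.
have normKK : forall i x, x \in K -> normK s i x \in K.
  move=> i x xK; rewrite /normK; elim: i => [|i IH]; first by rewrite big_ord0.
  by rewrite big_ord_recr /= groupM ?Kfrob.
have iotaN : forall i x, x \in K ->
    iota (normK s i x) = (\prod_(j < i) iter j F (iota x))%g.
  move=> i x xK; rewrite /normK; elim: i => [|i IH]; first by rewrite !big_ord0.
  rewrite !big_ord_recr /= hiota_morph ?Kfrob //; last first.
    by have := normKK i x xK; rewrite /normK.
  by rewrite IH -iotaFi.
have frobE : forall i k, iter i (frobK s) k = (k ^ (s ^+ i)^-1)%g.
  move=> i k; elim: i => [|i IH] /=; first by rewrite invg1 conjg1.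
  by rewrite IH /frobK expgS invMg conjgM.
set f := fun x => xit (x * s ^+ r)%g.
have Sh : forall y x a, y \in K -> x \in K ->
    iota x = (a^-1 * F a)%g -> iota y = (iter n F a * a^-1)%g ->
    shintani F iota K r m f y = f (normK s r x).
  move=> y x a yK xK ex ey; rewrite /shintani.
  case: pickP => [x' /andP[x'K /asboolP [a' [ex' ey']]] | none]; last first.
    have := none (normK s r x); rewrite normKK //=.
    move/negP; case; apply/asboolP; exists a; split => //.
    by rewrite iotaN // ex (@tele_h T F Fm).
  have Fc : iter n F (a^-1 * a')%g = (a^-1 * a')%g.
    have ea : iter n F a = (iota y * a)%g by rewrite ey mulgKV.
    have ea' : iter n F a' = (iota y * a')%g by rewrite ey' mulgKV.
    by rewrite Fn FnV ea ea' invMg -mulgA mulKg.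
  have [k kK ek] := (hiota_im _).1 Fc.
  have ex'2 : x' = (k^-1 * normK s r x * iter r (frobK s) k)%g.
    apply: hiota_inj => //; first by rewrite !groupM ?groupV ?normKK ?Kfrob.
    rewrite !hiota_morph ?groupM ?groupV ?normKK ?Kfrob // iotaV // iotaFi //.
    rewrite iotaN // ex (@tele_h T F Fm) ek ex' (@iter_morph_h T F r Fm) FrV invMg invgK.
    by rewrite !mulgA !mulgK.
  rewrite /f ex'2 frobE.
  have -> : (k^-1 * normK s r x * (k ^ (s ^+ r)^-1) * s ^+ r)%g
          = ((normK s r x * s ^+ r) ^ k)%g.
    by rewrite /conjg invgK !mulgA mulgKV.
  rewrite cfunJ //; apply: (subsetP (joing_subl _ _)).
  done.
pose alpha (x : gT) : T := proj1_sig (cid (Lang 1 isT (iota x))).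
have alphaP : forall x, iota x = ((alpha x)^-1 * F (alpha x))%g.
  by move=> x; rewrite /alpha; case: cid.
pose beta (y : gT) : T := ((proj1_sig (cid (Lang n n0 (iota y)^-1%g)))^-1)%g.
have betaP : forall y, iota y = (iter n F (beta y) * (beta y)^-1)%g.
  move=> y; rewrite /beta; case: cid => b /= eb.
  by rewrite FnV invgK -[iota y]invgK eb invMg invgK.
pose kof (t : T) : gT := odflt 1%g [pick k in K | `[< iota k = t >]].
have kofP : forall t, iter n F t = t -> kof t \in K /\ iota (kof t) = t.
  move=> t /(hiota_im t).1 [k kK ek]; rewrite /kof.
  case: pickP => [k' /andP[k'K /asboolP ->] //| none].
  by have := none k; rewrite kK /=; move/negP; case; apply/asboolP.
set GF := fixedK F iota K 1.
have GFK : forall u, u \in GF -> u \in K /\ F (iota u) = iota u.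
  by move=> u; rewrite inE => /andP[uK /eqP].
pose Phi (p : gT * gT) : gT * gT :=
  let a := (iota p.1 * alpha p.2)%g in
  let y := kof (iter n F a * a^-1)%g in
  (kof ((beta y)^-1 * a)%g, y).
have PhiP : forall u x, u \in GF -> x \in K ->
  let a := (iota u * alpha x)%g in
  [/\ iota x = (a^-1 * F a)%g,
      (Phi (u, x)).2 \in GF, iota (Phi (u, x)).2 = (iter n F a * a^-1)%g,
      (Phi (u, x)).1 \in K & iota (Phi (u, x)).1 = ((beta (Phi (u, x)).2)^-1 * a)%g].
  move=> u x uGF xK a; have [uK Fu] := GFK u uGF.
  have ex : iota x = (a^-1 * F a)%g.
    by rewrite /a Fm invMg Fu -mulgA mulKg -alphaP.
  have Ft : F (iter n F a * a^-1)%g = (iter n F a * a^-1)%g.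
    have Fa : F a = (a * iota x)%g by rewrite ex mulKVg.
    rewrite Fm (@morphV_h T _ Fm) -iterS iterSr Fa Fn invMg.
    have -> : iter n F (iota x) = iota x by apply/(hiota_im _).2; exists x.
    by rewrite mulgA mulgK.
  have Fnt : iter n F (iter n F a * a^-1)%g = (iter n F a * a^-1)%g.
    by move: Ft; set t := (iter n F a * a^-1)%g => Ft; elim: (n) => //= j ->.
  have [yK ey] := kofP _ Fnt.
  set y := kof _ in yK ey.
  have yGF : y \in GF by rewrite inE yK /= ey Ft eqxx.
  have Fd : iter n F ((beta y)^-1 * a)%g = ((beta y)^-1 * a)%g.
    have eb : iter n F (beta y) = (iota y * beta y)%g by rewrite betaP mulgKV.
    have ea : iter n F a = (iota y * a)%g by rewrite ey mulgKV.
    by rewrite Fn FnV eb ea invMg -mulgA mulKg.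
  have [cK ec] := kofP _ Fd.
  by split.
have PhiIn : forall p, p \in setX GF K -> Phi p \in setX K GF.
  move=> [u x] /setXP [uGF xK]; have [_ yGF _ cK _] := PhiP u x uGF xK.
  by case E : (Phi (u, x)) => [c y]; rewrite in_setX; rewrite E in yGF cK; rewrite cK yGF.
have PhiInj : {in setX GF K &, injective Phi}.
  move=> [u1 x1] [u2 x2] /setXP [u1GF x1K] /setXP [u2GF x2K] E.
  have [e1 _ ey1 _ ec1] := PhiP u1 x1 u1GF x1K.
  have [e2 _ ey2 _ ec2] := PhiP u2 x2 u2GF x2K.
  rewrite E in ec1; rewrite ec1 in ec2.
  have ea := mulgI _ _ _ ec2.
  rewrite ea in e1.
  have ex : x1 = x2 by apply: hiota_inj => //; rewrite e1 e2.
  rewrite ex in ea; have ea' := mulIg _ _ _ ea.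
  have [u1K _] := GFK u1 u1GF; have [u2K _] := GFK u2 u2GF.
  by rewrite (hiota_inj _ _ u1K u2K ea') ex.
have imPhi : [set Phi p | p in setX GF K] = setX K GF.
  apply/eqP; rewrite eqEcard card_in_imset // !cardsX mulnC leqnn andbT.
  by apply/subsetP => q /imsetP [p pA ->]; apply: PhiIn.
have key : (#|GF|%:R * \sum_(g in K) f (normK s r g) =
            #|K|%:R * \sum_(g in GF) shintani F iota K r m f g)%R.
  have L1 : (\sum_(p in setX GF K) f (normK s r p.2) =
             #|GF|%:R * \sum_(g in K) f (normK s r g))%R.
    by rewrite sumX_h /= sumr_const mulr_natl.
  have L2 : (\sum_(q in setX K GF) shintani F iota K r m f q.2 =
             #|K|%:R * \sum_(g in GF) shintani F iota K r m f g)%R.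
    by rewrite sumX_h /= sumr_const mulr_natl.
  rewrite -L1 -L2 -imPhi big_imset //=.
  apply: eq_bigr => -[u x] /setXP [uGF xK].
  have [ex yGF ey _ _] := PhiP u x uGF xK.
  have [yK _] := GFK _ yGF.
  by rewrite (Sh _ _ _ yK xK ex ey).
have oneGF : (1 \in GF)%g by rewrite inE group1 /= iota1 (@morph1_h T _ Fm).
have gnz : (#|GF|%:R != 0 :> algC)%R.
  by rewrite pnatr_eq0 -lt0n; apply/card_gt0P; exists 1%g.
rewrite -/GF -/f.
have -> : (\sum_(g in K) xit (normK s r g * s ^+ r)%g =
           \sum_(g in K) f (normK s r g))%R by [].
rewrite -(mulKf gnz (\sum_(g in K) f (normK s r g))%R) key mulrCA mulKf //.
by rewrite pnatr_eq0 -lt0n; apply/card_gt0P; exists 1%g.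
Qed.
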